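(* Consider any algorithm on any fitness function over $\{0,1\}^n$ that creates offspring from previously visited search points by standard bit mutation with mutation rate $1/n$, and assume the algorithm has created $o(n^3)$ offspring so far. Let $x\in\{0,1\}^n$ be any search point. Then the probability that a random offspring of $x$ (created by standard bit mutation) has not yet been queried is $\Omega(1)$. In particular, if the fitness function is $\mathrm{disOM}$ with distortion probability $p$, the probability that this offspring is distorted is $\Omega(p)$.
   Context: Asymptotics as $n\to\infty$. Standard bit mutation flips each bit independently with probability $1/n$. For $x\in\{0,1\}^n$, $\mathrm{OM}(x)=\sum_i x_i$. Distorted OneMax with parameters $p\in(0,1]$, $d>0$: each $x\in\{0,1\}^n$ is independently distorted with probability $p$ and clean otherwise (this randomness is fixed once and for all); $\mathrm{disOM}(x)=\mathrm{OM}(x)+d$ if $x$ is distorted, else $\mathrm{OM}(x)$. *)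

(* Defs.v *)
From HB Require Import structures.
From mathcomp Require Import all_boot all_order all_algebra.
From mathcomp Require Import reals.
Set Implicit Arguments. Unset Strict Implicit. Unset Printing Implicit Defensive.
Import Order.TTheory GRing.Theory Num.Theory.
Local Open Scope ring_scope.

Definition bs (n : nat) := {ffun 'I_n -> bool}.

Definition OM n (x : bs n) : nat := #|[set i | x i]|.

Definition hamming n (x y : bs n) : nat := #|[set i | x i != y i]|.

Definition mut (R : realType) n (x y : bs n) : R :=
  (n%:R^-1) ^+ hamming x y * (1 - n%:R^-1) ^+ (n - hamming x y).

Definition prob_unqueried (R : realType) n (x : bs n) (Q : {set bs n}) : R :=
  \sum_(y | y \notin Q) mut R x y.

(* Distortion pattern: d z = true iff z is distorted.  Each point is distorted
   independently with probability p: weight of a pattern d. *)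
Definition dist_weight (R : realType) n (p : R) (d : {ffun bs n -> bool}) : R :=
  \prod_z (if d z then p else 1 - p).

Definition disOM (R : realType) n (dd : R) (d : {ffun bs n -> bool}) (x : bs n) : R :=
  (OM x)%:R + (if d x then dd else 0).

(* The history h fixes the (observed) distortion status of the queried points
   in Q; a pattern d is consistent with it if it agrees with h on Q. *)
Definition consistent n (Q : {set bs n}) (h d : {ffun bs n -> bool}) : bool :=
  [forall z in Q, d z == h z].

Definition hist_weight (R : realType) n (p : R) (Q : {set bs n})
    (h : {ffun bs n -> bool}) : R :=
  \sum_(d | consistent Q h d) dist_weight p d.

(* Conditional probability (given the history h on Q), over the random
   distortion pattern and the standard bit mutation of x, that the offspring
   of x is distorted. *)
Definition prob_distorted (R : realType) n (p : R) (Q : {set bs n})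
    (h : {ffun bs n -> bool}) (x : bs n) : R :=
  (\sum_(d | consistent Q h d)
      dist_weight p d * \sum_y mut R x y * (d y)%:R) / hist_weight p Q h.

(* Main.v *)
Require Import Defs.
From HB Require Import structures.
From mathcomp Require Import all_boot all_order all_algebra.
From mathcomp Require Import reals.
From mathcomp.analysis Require Import sequences exp.
From mathcomp Require Import ring lra zify.
Import Order.TTheory GRing.Theory Num.Theory.
Local Open Scope ring_scope.

Lemma pow_lb (R : realType) (n : nat) : (2 <= n)%N ->
  (expR (2:R))^-1 <= (1 - n%:R^-1) ^+ n.
Proof.
move=> n2.
have n0 : (0:R) < n%:R by rewrite ltr0n; lia.
set t := n%:R^-1.
have t0 : 0 < t by rewrite invr_gt0.
have t2 : t <= 2^-1.
  by rewrite /t lef_pV2 ?posrE // ler_nat.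
have key : 1 <= expR (2 * t) * (1 - t).
  apply: le_trans (_ : (1 + 2 * t) * (1 - t) <= _).
    have h1 : 0 <= t * (1 - 2 * t) by apply: mulr_ge0; lra.
    lra.
  apply: ler_wpM2r; first lra.
  exact: expR_ge1Dx.
have -> : (2:R) = n%:R * (2 * t).
  by rewrite mulrCA /t mulfV ?mulr1 // gt_eqF.
rewrite expRM_natl -exprVn.
apply: lerXn2r; rewrite ?nnegrE ?invr_ge0 ?expR_ge0 //; first lra.
rewrite -[_^-1]mulr1 ler_pdivrMl ?expR_gt0 //.
Qed.

Lemma mut_ge0 (R : realType) n (x y : bs n) : (0 < n)%N -> 0 <= mut R x y.
Proof.
move=> n0; rewrite /mut; apply: mulr_ge0; apply: exprn_ge0.
  by rewrite invr_ge0.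
rewrite subr_ge0 invf_le1 ?ltr0n // ler1n //.
Qed.

Definition flipS n (x : bs n) (S : {set 'I_n}) : bs n := [ffun i => x i (+) (i \in S)].
Arguments flipS {n}.

Lemma flipS_inj n (x : bs n) : injective (flipS x).
Proof.
move=> S1 S2 /ffunP E; apply/setP => i; have := E i; rewrite !ffunE.
by case: (x i); case: (i \in S1); case: (i \in S2).
Qed.

Lemma ham_flipS n (x : bs n) S : hamming x (flipS x S) = #|S|.
Proof.
rewrite /hamming; apply: eq_card => i; rewrite inE ffunE.
by case: (x i); case: (i \in S).
Qed.

Lemma card_ham3 n (x : bs n) : #|[set y | hamming x y == 3]| = 'C(n,3).
Proof.
have -> : [set y | hamming x y == 3] = flipS x @: [set S : {set 'I_n} | #|S| == 3].
  apply/setP => y; rewrite inE; apply/idP/imsetP.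
    move=> hy; exists [set i | x i != y i]; first by rewrite inE.
    apply/ffunP => i; rewrite ffunE inE.
    by case: (x i); case: (y i).
  by case=> S; rewrite inE => /eqP <- ->; rewrite ham_flipS.
by rewrite card_imset; [rewrite card_draws card_ord | exact: flipS_inj].
Qed.

Definition flipd n (y : bs n) (d : {ffun bs n -> bool}) : {ffun bs n -> bool} :=
  [ffun z => if z == y then ~~ d z else d z].
Arguments flipd {n}.

Lemma flipdK n (y : bs n) : involutive (flipd y).
Proof. by move=> d; apply/ffunP => z; rewrite !ffunE; case: eqP => // _; rewrite negbK. Qed.

Lemma indep (R : realType) n (p : R) (Q : {set bs n}) h (y : bs n) : y \notin Q ->
  \sum_(d | consistent Q h d) dist_weight p d * (d y)%:R = p * hist_weight p Q h.
Proof.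
move=> yQ.
pose P (d : {ffun bs n -> bool}) := \prod_(z | z != y) (if d z then p else 1 - p).
have wE d : dist_weight p d = (if d y then p else 1 - p) * P d.
  by rewrite /dist_weight (bigD1 y).
have consE d : consistent Q h (flipd y d) = consistent Q h d.
  rewrite /consistent; apply: eq_forallb => z; rewrite ffunE.
  by case: (z =P y) => // ->; rewrite (negbTE yQ).
have PE d : P (flipd y d) = P d.
  by apply: eq_bigr => z /negbTE zy; rewrite ffunE zy.
have A : \sum_(d | consistent Q h d && ~~ d y) P d = \sum_(d | consistent Q h d && d y) P d.
  rewrite (reindex_inj (can_inj (@flipdK n y))) /=.
  apply: eq_big => d; first by rewrite consE ffunE eqxx negbK.
  by move=> _; rewrite PE.
rewrite /hist_weight (bigID (fun d : {ffun bs n -> bool} => d y)) /= [in RHS](bigID (fun d : {ffun bs n -> bool} => d y)) /=.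
rewrite [X in _ + X = _]big1; last by move=> d /andP[_ /negbTE ->]; rewrite mulr0.
rewrite addr0.
have -> : \sum_(i | consistent Q h i && i y) dist_weight p i * (i y)%:R
   = p * \sum_(d | consistent Q h d && d y) P d.
  by rewrite mulr_sumr; apply: eq_bigr => d /andP[_ dy]; rewrite wE dy mulr1.
have -> : \sum_(i | consistent Q h i && i y) dist_weight p i
   = p * \sum_(d | consistent Q h d && d y) P d.
  by rewrite mulr_sumr; apply: eq_bigr => d /andP[_ dy]; rewrite wE dy.
have -> : \sum_(i | consistent Q h i && ~~ i y) dist_weight p i
   = (1 - p) * \sum_(d | consistent Q h d && d y) P d.
  by rewrite -A mulr_sumr; apply: eq_bigr => d /andP[_ /negbTE dy]; rewrite wE dy.
ring.
Qed.

Lemma binC3 n : (6 <= n)%N -> (n ^ 3 <= 12 * 'C(n, 3))%N.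
Proof.
move=> n6; have := bin_ffact n 3.
rewrite (_ : 3`! = 6) // !ffactnS ffactn0 => H.
have e : (12 * 'C(n, 3) = 2 * (n * (n.-1 * (n.-1.-1 * 1))))%N by rewrite -H; lia.
rewrite e; nia.
Qed.

Lemma unq_lb (R : realType) n (x : bs n) (Q : {set bs n}) : (10 <= n)%N ->
  #|Q|%:R <= (24:R)^-1 * n%:R ^+ 3 -> (expR (2:R))^-1 / 24 <= prob_unqueried R x Q.
Proof.
move=> n10 hQ.
have n0 : (0:R) < n%:R by rewrite ltr0n; lia.
set A := [set y | hamming x y == 3].
rewrite /prob_unqueried (bigID (fun y : bs n => y \in A)) /=.
have r0 : 0 <= \sum_(i | (i \notin Q) && (i \notin A)) mut R x i.
  by apply: sumr_ge0 => i _; apply: mut_ge0; lia.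
suff : (expR (2:R))^-1 / 24 <= \sum_(i | (i \notin Q) && (i \in A)) mut R x i by lra.
pose t : R := n%:R^-1.
have -> : \sum_(i | (i \notin Q) && (i \in A)) mut R x i
    = \sum_(i in A :\: Q) (t ^+ 3 * (1 - t) ^+ (n - 3)).
  apply: eq_big => [i|i]; first by rewrite in_setD.
  by rewrite inE => /andP[_ /eqP h3]; rewrite /mut h3.
rewrite sumr_const -[_ *+ #|_|]mulr_natr.
have card1 : (#|A| <= #|A :\: Q| + #|Q|)%N.
  rewrite cardsD; have : (#|A :&: Q| <= #|Q|)%N by apply: subset_leq_card; apply: subsetIr.
  lia.
have cardA : (n ^ 3 <= 12 * #|A|)%N by rewrite card_ham3; apply: binC3; lia.
have cardR : n%:R ^+ 3 <= 12 * (#|A :\: Q|%:R + #|Q|%:R) :> R.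
  rewrite -natrD -natrX -natrM ler_nat; lia.
have cardD : n%:R ^+ 3 / 24 <= #|A :\: Q|%:R :> R by lra.
have tn : t ^+ 3 * n%:R ^+ 3 = 1 by rewrite -exprMn /t mulVf ?expr1n // gt_eqF.
have t1 : 0 <= 1 - t <= 1.
  rewrite /t subr_ge0 invf_le1 ?ltr0n ?ler1n; last lia.
  rewrite lerBlDr lerDl invr_ge0 ltW //; lia.
have pw : (1 - t) ^+ n <= (1 - t) ^+ (n - 3).
  case/andP: t1 => t1a t1b.
  by apply: ler_wiXn2l => //; rewrite leq_subr.
have lb : (expR (2:R))^-1 <= (1 - t) ^+ n by apply: pow_lb; lia.
have tpos : 0 <= t ^+ 3 by rewrite exprn_ge0 // invr_ge0 ltW.
have h2 := ler_wpM2l tpos cardD.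
have X0 : 0 <= (1 - t) ^+ (n - 3) by apply: exprn_ge0; case/andP: t1.
have h3 := ler_wpM2l X0 h2.
have h4 : t ^+ 3 * (n%:R ^+ 3 / 24) = 24^-1 by rewrite mulrA tn mul1r.
rewrite h4 in h3.
lra.
Qed.

Lemma num_eq (R : realType) n (p : R) (Q : {set bs n}) h (x : bs n) :
  \sum_(d | consistent Q h d) dist_weight p d * \sum_y mut R x y * (d y)%:R
  = \sum_y mut R x y * \sum_(d | consistent Q h d) dist_weight p d * (d y)%:R.
Proof.
under eq_bigr do rewrite mulr_sumr.
rewrite exchange_big /=; apply: eq_bigr => y _.
rewrite mulr_sumr; apply: eq_bigr => d _; ring.
Qed.

Theorem lemma3 (R : realType) (g : nat -> nat)
  (g_o_n3 : forall eps : R, 0 < eps ->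
     exists N : nat, forall n : nat, (N <= n)%N -> (g n)%:R <= eps * n%:R ^+ 3) :
  exists c : R, 0 < c /\
  exists N : nat, forall n : nat, (N <= n)%N ->
    forall (Q : {set bs n}) (x : bs n), (#|Q| <= g n)%N ->
      c <= prob_unqueried R x Q /\
      forall (p : R) (h : {ffun bs n -> bool}),
        0 < p <= 1 -> 0 < hist_weight p Q h ->
        c * p <= prob_distorted p Q h x.
Proof.
have [N0 HN0] := g_o_n3 (24^-1) ltac:(by rewrite invr_gt0).
exists ((expR (2:R))^-1 / 24); split.
  by rewrite divr_gt0 // invr_gt0 expR_gt0.
exists (maxn N0 10) => n; rewrite geq_max => /andP[nN0 n10] Q x hQ.
have hQR : #|Q|%:R <= (24:R)^-1 * n%:R ^+ 3.
  apply: le_trans (HN0 n nN0); by rewrite ler_nat.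
have U := @unq_lb R n x Q n10 hQR.
split => // p h /andP[p0 p1] H0.
rewrite /prob_distorted num_eq.
have w0 d : 0 <= dist_weight p d.
  by apply: prodr_ge0 => z _; case: (d z); lra.
rewrite (bigID (fun y : bs n => y \in Q)) /=.
have S0 : 0 <= \sum_(i | i \in Q) mut R x i *
       \sum_(d | consistent Q h d) dist_weight p d * (d i)%:R.
  apply: sumr_ge0 => y _; apply: mulr_ge0; first by apply: mut_ge0; lia.
  by apply: sumr_ge0 => d _; apply: mulr_ge0.
have -> : \sum_(i | i \notin Q) mut R x i *
       \sum_(d | consistent Q h d) dist_weight p d * (d i)%:R
    = p * hist_weight p Q h * prob_unqueried R x Q.
  rewrite /prob_unqueried mulr_sumr; apply: eq_bigr => y yQ.
  by rewrite indep // mulrC.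
rewrite ler_pdivlMr //.
have pH : 0 <= p * hist_weight p Q h by apply: mulr_ge0; apply: ltW.
have := ler_wpM2l pH U.
set c := (expR (2:R))^-1 / 24.
set S := \sum_(i in Q) _.
move: S0; rewrite -/S => S0.
set H := hist_weight p Q h.
set P := prob_unqueried R x Q.
rewrite mulrAC => hh.
lra.
Qed.
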